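(* Let $G$ be a graph that has a canonical dominating set, let $D_s,D_t$ be dominating sets of $G$, and let $k=\max\{|D_s|,|D_t|\}$. Then $D_s\leftrightarrow_k D_t$ holds if and only if, for every $i\in\{s,t\}$ with $|D_i|=k$, the set $D_i$ is not a minimal dominating set.
   Context: All graphs are finite, simple and undirected. A set $D\subseteq V(G)$ is a dominating set if every vertex of $G$ is in $D$ or adjacent to a vertex of $D$; it is minimal if no proper subset $D\setminus\{w\}$, $w\in D$, is a dominating set. Two dominating sets $D,D'$ of $G$ are adjacent if $|D\triangle D'|=1$. For dominating sets $D_p,D_q$ and an integer $k>0$, write $D_p\leftrightarrow_k D_q$ if there is a sequence $D_0=D_p,D_1,\dots,D_\ell=D_q$ ($\ell\ge 0$) of dominating sets of $G$ with $D_{i-1},D_i$ adjacent for all $i\ge1$ and $|D_i|\le k$ for all $i$. A minimum dominating set $D^*$ of $G$ is called canonical if $D\leftrightarrow_{|D|+1} D^*$ holds for every dominating set $D$ of $G$. *)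

(* Defs.v *)
From mathcomp Require Import all_boot.
Set Implicit Arguments. Unset Strict Implicit. Unset Printing Implicit Defensive.

Definition simple_graph (T : finType) (e : rel T) : Prop :=
  symmetric e /\ irreflexive e.

Definition dominating (T : finType) (e : rel T) (D : {set T}) : Prop :=
  forall v : T, v \in D \/ exists2 u, u \in D & e v u.

Definition minimal_dominating (T : finType) (e : rel T) (D : {set T}) : Prop :=
  dominating e D /\ forall w, w \in D -> ~ dominating e (D :\ w).

Definition minimum_dominating (T : finType) (e : rel T) (D : {set T}) : Prop :=
  dominating e D /\ forall D', dominating e D' -> #|D| <= #|D'|.

Definition set_adj (T : finType) (D D' : {set T}) : bool :=
  #|(D :\: D') :|: (D' :\: D)| == 1.

(* D_p <->_k D_q : a sequence D_0 = D_p, D_1, ..., D_l = D_q (l >= 0) of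
   dominating sets, consecutive ones adjacent, all of size <= k. *)
Definition reconf (T : finType) (e : rel T) (k : nat) (Dp Dq : {set T}) : Prop :=
  exists s : seq {set T},
    [/\ path (@set_adj T) Dp s, last Dp s = Dq,
        (forall D, D \in Dp :: s -> dominating e D) &
        (forall D, D \in Dp :: s -> #|D| <= k)].

Definition canonical_dominating (T : finType) (e : rel T) (Ds : {set T}) : Prop :=
  minimum_dominating e Ds /\
  forall D, dominating e D -> reconf e (#|D| + 1) D Ds.

(* Main.v *)
Require Import Defs.
From mathcomp Require Import all_boot.
From Stdlib Require Import Classical.
Set Implicit Arguments. Unset Strict Implicit.

Section L.
Variables (T : finType) (e : rel T).

Lemma set_adjC (D D' : {set T}) : set_adj D D' = set_adj D' D.
Proof. by rewrite /set_adj setUC. Qed.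

Lemma adj_cases (D D' : {set T}) : set_adj D D' ->
  exists x, (x \notin D /\ D' = x |: D) \/ (x \in D /\ D' = D :\ x).
Proof.
rewrite /set_adj => /cards1P [x Hx].
have Hxx : x \in (D :\: D') :|: (D' :\: D) by rewrite Hx set11.
have Hy : forall y, (y \in (D :\: D') :|: (D' :\: D)) = (y == x).
  by move=> y; rewrite Hx inE.
exists x; case Dx: (x \in D); [right|left]; split => //.
- apply/setP => y; have := Hy y; rewrite !inE.
  case: (y =P x) => [-> |_]; first by rewrite Dx; case: (x \in D').
  by case: (y \in D); case: (y \in D').
- apply/setP => y; have := Hy y; rewrite !inE.
  case: (y =P x) => [-> |_]; first by rewrite Dx; case: (x \in D').
  by case: (y \in D); case: (y \in D').
Qed.

Lemma bad_step k (D D' : {set T}) : #|D| = k -> minimal_dominating e D ->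
  set_adj D D' -> dominating e D' -> #|D'| <= k -> False.
Proof.
move=> Hk [_ Hmin] /adj_cases [x [[Hx ->]|[Hx ->]]] Hd Hc.
- by move: Hc; rewrite cardsU1 Hx Hk add1n ltnn.
- exact: (Hmin x Hx Hd).
Qed.

Lemma reconf_mono k k' D D' : k <= k' -> reconf e k D D' -> reconf e k' D D'.
Proof.
move=> Hk [s [H1 H2 H3 H4]]; exists s; split => // D0 /H4 H; exact: leq_trans Hk.
Qed.

Lemma reconf_step k (D D' : {set T}) : set_adj D D' -> dominating e D ->
  dominating e D' -> #|D| <= k -> #|D'| <= k -> reconf e k D D'.
Proof.
move=> Ha Hd Hd' Hc Hc'; exists [:: D']; split => /=; first by rewrite Ha.
- done.
- by move=> D0; rewrite !inE => /orP [/eqP->|/eqP->].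
- by move=> D0; rewrite !inE => /orP [/eqP->|/eqP->].
Qed.

Lemma reconf_trans k D1 D2 D3 : reconf e k D1 D2 -> reconf e k D2 D3 ->
  reconf e k D1 D3.
Proof.
move=> [s1 [P1 L1 A1 B1]] [s2 [P2 L2 A2 B2]].
have mem : forall D, D \in D1 :: s1 ++ s2 -> D \in D1 :: s1 \/ D \in D2 :: s2.
  move=> D; rewrite -cat_cons mem_cat => /orP [H|H]; first by left.
  by right; rewrite inE H orbT.
exists (s1 ++ s2); split.
- by rewrite cat_path P1 L1 P2.
- by rewrite last_cat L1.
- by move=> D /mem [/A1|/A2].
- by move=> D /mem [/B1|/B2].
Qed.

Lemma reconf_sym k D1 D2 : reconf e k D1 D2 -> reconf e k D2 D1.
Proof.
move=> [s [P L A B]].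
case/lastP: s P L A B => [|s' x] P L A B.
  by exists [::]; split => //= ; rewrite -L.
simpl in L; rewrite last_rcons in L; subst x.
have mem : forall D, D \in D2 :: rev (D1 :: s') -> D \in D1 :: rcons s' D2.
  move=> D; rewrite inE mem_rev -rcons_cons mem_rcons inE => /orP [->|->] //.
  by rewrite orbT.
exists (rev (D1 :: s')); split.
- have := rev_path (@set_adj T) D1 (rcons s' D2).
  rewrite last_rcons belast_rcons => ->.
  rewrite (@eq_path _ _ (@set_adj T)) //; move=> a b /=; exact: set_adjC.
- by rewrite rev_cons last_rcons.
- by move=> D /mem /A.
- by move=> D /mem /B.
Qed.

Lemma reach_can Dc D k : canonical_dominating e Dc -> dominating e D ->
  #|D| <= k -> (#|D| = k -> ~ minimal_dominating e D) -> reconf e k D Dc.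
Proof.
move=> [_ Hc] HD Hk Hm.
case: (ltngtP #|D| k) Hk => // Hlt _.
  by apply: reconf_mono (Hc D HD); rewrite addn1.
have Hnm := Hm Hlt.
have [w Hw Hdw] : exists2 w, w \in D & dominating e (D :\ w).
  apply: NNPP => Hn; apply: Hnm; split => // w Hw Hdw; apply: Hn; by exists w.
have Hcard : #|D :\ w| + 1 = k by rewrite -Hlt (cardsD1 w D) Hw add1n addn1.
apply: reconf_trans (_ : reconf e k (D :\ w) Dc).
  apply: reconf_step => //; last by rewrite -Hcard leq_addr.
    rewrite /set_adj.
    have -> : (D :\: (D :\ w)) :|: ((D :\ w) :\: D) = [set w].
      apply/setP => y; rewrite !inE; case: (y =P w) => [->|]; first by rewrite Hw.
      by case: (y \in D).
    by rewrite cards1.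
  by rewrite Hlt.
by rewrite -Hcard; apply: Hc.
Qed.

End L.

Theorem lemma2 (T : finType) (e : rel T) (Hg : simple_graph e)
  (Hcan : exists Dc : {set T}, canonical_dominating e Dc)
  (Ds Dt : {set T}) (HDs : dominating e Ds) (HDt : dominating e Dt)
  (Hneq : Ds <> Dt) :
  let k := maxn #|Ds| #|Dt| in
  reconf e k Ds Dt <->
  ((#|Ds| = k -> ~ minimal_dominating e Ds) /\
   (#|Dt| = k -> ~ minimal_dominating e Dt)).
Proof.
move=> k; split.
- move=> [s [P L A B]]; split => Hk Hm.
  + case: s P L A B => [|D1 s] P L A B; first by apply: Hneq.
    move: P => /= /andP [Ha _].
    apply: (bad_step Hk Hm Ha); [apply: A | apply: B]; by rewrite !inE eqxx orbT.
  + case/lastP: s P L A B => [|s' x] P L A B; first by apply: Hneq.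
    rewrite last_rcons in L; subst x.
    move: P; rewrite rcons_path => /andP [_ Ha]; rewrite set_adjC in Ha.
    have Hm' : last Ds s' \in Ds :: rcons s' Dt.
      by rewrite -rcons_cons mem_rcons inE (mem_last Ds s') orbT.
    exact: (bad_step Hk Hm Ha (A _ Hm') (B _ Hm')).
- move=> [H1 H2]; case: Hcan => Dc Hc.
  apply: reconf_trans (reach_can Hc HDs (leq_maxl _ _) H1) _.
  apply: reconf_sym; exact: reach_can Hc HDt (leq_maxr _ _) H2.
Qed.
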